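(* A matroid is binary if and only if it is a BULMAC matroid, i.e., if and only if it is isomorphic to the matroid on $E_m=\{1,\dots,m\}$ with rank function $S\mapsto I(X[S];Y,X[S^c])$ for some linear deterministic binary MAC $W$ (that is, $Y=AX[E_m]$ for some matrix $A$ over $\mathbb{F}_2$ with $m$ columns).
   Context: A binary MAC with $m$ users is a channel $W$ with input alphabet $\mathbb{F}_2^m$ and finite output alphabet. Let $X[E_m]$ have i.i.d. uniform components on $\mathbb{F}_2$ and let $Y$ be the output of $W$ with input $X[E_m]$; for $S\subseteq E_m$, $X[S]=(X[i])_{i\in S}$, $S^c=E_m\setminus S$. Mutual information is in bits. A linear deterministic binary MAC is one with $W(y\mid x)=1$ if $y=Ax$ and $0$ otherwise, for a fixed matrix $A$ over $\mathbb{F}_2$. A matroid is binary if it is isomorphic to the vector matroid of a matrix over $\mathbb{F}_2$. *)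

(* Defs.v *)
From Stdlib Require Import Reals.
From mathcomp Require Import all_boot all_algebra.

Set Implicit Arguments.
Unset Strict Implicit.
Unset Printing Implicit Defensive.

Definition is_matroid_rank (T : finType) (r : {set T} -> nat) : Prop :=
  [/\ (forall X : {set T}, r X <= #|X|)%N,
      (forall X Y : {set T}, X \subset Y -> r X <= r Y)%N &
      (forall X Y : {set T}, r (X :|: Y) + r (X :&: Y) <= r X + r Y)%N].

(* Vector matroid of a matrix B over F_2 on its column index set 'I_n:
   rank of S = dimension of the span of the columns indexed by S
   (= rank of B with the columns outside S replaced by zero). *)
Local Open Scope ring_scope.
Definition vec_rank (k n : nat) (B : 'M['F_2]_(k, n)) (S : {set 'I_n}) : nat :=
  \rank (\matrix_(i < k, j < n) (if j \in S then B i j else 0)).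
Local Close Scope ring_scope.

Definition binary_matroid (T : finType) (r : {set T} -> nat) : Prop :=
  exists (k n : nat) (B : 'M['F_2]_(k, n)) (f : T -> 'I_n),
    bijective f /\ forall X : {set T}, r X = vec_rank B (f @: X).

Local Open Scope R_scope.

Definition log2 (x : R) : R := ln x / ln 2.

Definition law (Om V : finType) (g : Om -> V) (v : V) : R :=
  INR #|[set w | g w == v]| / INR #|Om|.

(* Shannon entropy in bits; terms with zero probability contribute
   0 * log2 0 = 0 (convention 0 log 0 = 0). *)
Definition entropy (Om V : finType) (g : Om -> V) : R :=
  - \big[Rplus/0]_(v : V) (law g v * log2 (law g v)).

Definition minfo (Om V1 V2 : finType) (g1 : Om -> V1) (g2 : Om -> V2) : R :=
  entropy g1 + entropy g2 - entropy (fun w => (g1 w, g2 w)).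

(* X[E_m] : the input vector (uniform on F_2^m, i.e. i.i.d. uniform bits). 
   X[S] : the sub-vector indexed by S, encoded injectively as a finite function
   returning None outside S. *)
Definition restr (m : nat) (S : {set 'I_m}) (x : 'cV['F_2]_m) : {ffun 'I_m -> option 'F_2} :=
  [ffun i => if i \in S then Some (x i ord0) else None].

Definition bulmac_rank (k m : nat) (A : 'M['F_2]_(k, m)) (S : {set 'I_m}) : R :=
  minfo (restr S) (fun x : 'cV['F_2]_m => ((A *m x)%R, restr (~: S) x)).

Definition bulmac_matroid (T : finType) (r : {set T} -> nat) : Prop :=
  exists (k m : nat) (A : 'M['F_2]_(k, m)) (f : T -> 'I_m),
    bijective f /\ forall X : {set T}, INR (r X) = bulmac_rank A (f @: X).

(* Main.v *)
Require Import Defs.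
From Stdlib Require Import Reals Lra.
From mathcomp Require Import all_boot all_algebra.
Set Implicit Arguments. Unset Strict Implicit. Unset Printing Implicit Defensive.
Import GRing.Theory.
Local Open Scope ring_scope.

Lemma card_F2 : #|'F_2| = 2%N.
Proof. by rewrite card_Fp. Qed.

Lemma card_rowsp (m n : nat) (B : 'M['F_2]_(m, n)) :
  #|[set v : 'rV['F_2]_n | (v <= B)%MS]| = (2 ^ \rank B)%N.
Proof.
have -> : (2 ^ \rank B)%N = #|{: 'M['F_2]_(1, \rank B)}| by rewrite card_mx card_F2 mul1n.
have injA: injective (mulmxr (row_base B)).
  have /row_freeP[A' A'K] := row_base_free B.
  by move=> ?; apply: can_inj (mulmxr A') _ => u; rewrite /= -mulmxA A'K mulmx1.
rewrite -(card_image (injA _)); apply: eq_card => v.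
by rewrite inE -(eq_row_base B) (sameP submxP codomP).
Qed.

Lemma card_ker (k m : nat) (C : 'M['F_2]_(k, m)) :
  #|[set z : 'cV['F_2]_m | C *m z == 0]| = (2 ^ (m - \rank C))%N.
Proof.
rewrite -(mxrank_tr C) -mxrank_ker -card_rowsp.
have -> : [set v : 'rV['F_2]_m | (v <= kermx C^T)%MS] =
   [set z^T | z in [set z : 'cV['F_2]_m | C *m z == 0]].
  apply/setP => v; rewrite inE sub_kermx; apply/idP/imsetP.
    move=> h; exists v^T; last by rewrite trmxK.
    by rewrite inE -(inj_eq (@trmx_inj _ _ _)) trmx_mul trmxK trmx0.
  by move=> [z]; rewrite inE => hz ->; rewrite -trmx_mul (eqP hz) trmx0.
by rewrite card_imset //; exact: trmx_inj.
Qed.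
Section K.
Variables (k m : nat) (A : 'M['F_2]_(k, m)) (S : {set 'I_m}).
Definition AS := \matrix_(i < k, j < m) (if j \in S then A i j else 0).
Definition K1 := [set z : 'cV['F_2]_m | [forall i in S, z i ord0 == 0]].
Definition K2 := [set z : 'cV['F_2]_m | (A *m z == 0) && [forall i in ~: S, z i ord0 == 0]].
Definition KA := [set z : 'cV['F_2]_m | AS *m z == 0].

Lemma AS_off (z : 'cV['F_2]_m) : (forall i, i \in S -> z i ord0 = 0) -> AS *m z = 0.
Proof.
move=> h; apply/matrixP => i j; rewrite !mxE big1 // => l _.
rewrite mxE; case: ifP => hl; first by rewrite (ord1 j) h // mulr0.
by rewrite mul0r.
Qed.

Lemma AS_on (z : 'cV['F_2]_m) : (forall i, i \notin S -> z i ord0 = 0) -> AS *m z = A *m z.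
Proof.
move=> h; apply/matrixP => i j; rewrite !mxE; apply: eq_bigr => l _.
rewrite mxE; case: ifP => hl //; by rewrite (ord1 j) h ?hl // !mulr0.
Qed.

Lemma card_K12 : (#|K1| * #|K2| = #|KA|)%N.
Proof.
rewrite -cardsX.
have -> : KA = [set p.1 + p.2 | p in setX K1 K2].
  apply/setP => z; rewrite inE; apply/idP/imsetP.
    move=> hz.
    exists (\col_i (if i \in S then 0 else z i ord0), \col_i (if i \in S then z i ord0 else 0)).
      rewrite !inE /=; apply/andP; split.
        by apply/forallP => i; apply/implyP => hi; rewrite mxE hi.
      apply/andP; split; last first.
        by apply/forallP => i; apply/implyP; rewrite inE => hi; rewrite mxE (negbTE hi).
      rewrite -AS_on; last by move=> i hi; rewrite mxE (negbTE hi).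
      rewrite -(eqP hz); apply/eqP; apply/matrixP => i j; rewrite !mxE; apply: eq_bigr => l _.
      by rewrite !mxE (ord1 j); case: (l \in S); rewrite ?mul0r //; reflexivity.
    by apply/matrixP => i j; rewrite !mxE (ord1 j); case: ifP; rewrite ?add0r ?addr0.
  move=> [[a b]]; rewrite !inE /= => /andP [ha /andP [hb hb']] ->.
  rewrite mulmxDr AS_off; last by move=> i hi; apply/eqP; exact: (implyP (forallP ha i)).
  rewrite AS_on ?(eqP hb) ?addr0 //.
  by move=> i hi; apply/eqP; apply: (implyP (forallP hb' i)); rewrite inE.
rewrite card_in_imset //.
move=> [a b] [a' b']; rewrite !inE /= => /andP [ha /andP [_ hb]] /andP [ha' /andP [_ hb']] e.
have E : forall i, a i ord0 = a' i ord0 /\ b i ord0 = b' i ord0.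
  move=> i; have := congr1 (fun M : 'cV__ => M i ord0) e; rewrite /= !mxE.
  case hi: (i \in S).
    rewrite (eqP (implyP (forallP ha i) hi)) (eqP (implyP (forallP ha' i) hi)) !add0r.
    by [].
  have hi' : i \in ~: S by rewrite inE hi.
  rewrite (eqP (implyP (forallP hb i) hi')) (eqP (implyP (forallP hb' i) hi')) !addr0.
  by [].
congr (_, _); apply/matrixP => i j; rewrite (ord1 j); by case: (E i).
Qed.
End K.
Local Close Scope ring_scope.
Local Open Scope R_scope.
Lemma bigR_mulr (I : finType) (f : I -> R) (c : R) :
  \big[Rplus/0]_(i : I) (f i * c) = (\big[Rplus/0]_(i : I) f i) * c.
Proof. elim/big_rec2: _ => [|i y1 y2 _ ->]; ring. Qed.

Lemma INR_sum (I : finType) (f : I -> nat) :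
  INR (\sum_(i : I) f i)%N = \big[Rplus/0]_(i : I) INR (f i).
Proof. elim/big_rec2: _ => [|i y1 y2 _ <-] //; by rewrite plus_INR. Qed.

Lemma sum_fibers (Om V : finType) (g : Om -> V) :
  (\sum_(v : V) #|[set w | g w == v]|)%N = #|Om|.
Proof.
rewrite -sum1_card (partition_big g predT) //=.
apply: eq_bigr => v _; rewrite -sum1_card; apply: eq_bigl => w.
by rewrite inE.
Qed.

Lemma entropy_K m (V : finType) (g : 'cV['F_2]_m -> V) (K : {set 'cV['F_2]_m}) :
  (forall x y, (g x == g y) = (x - y \in K)%R) ->
  entropy g = (ln (INR #|{: 'cV['F_2]_m}|) - ln (INR #|K|)) / ln 2.
Proof.
move=> hK.
have K0 : (0%R \in K) by rewrite -(subrr (0%R : 'cV['F_2]_m)) -hK.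
have NK : (0 < #|K|)%N by apply/card_gt0P; exists 0%R.
have NN : (0 < #|{: 'cV['F_2]_m}|)%N by apply/card_gt0P; exists 0%R.
have fib : forall v, #|[set w | g w == v]| = if [exists w, g w == v] then #|K| else 0%N.
  move=> v; case: existsP => [[x0 hx0]|hn].
    rewrite -(@card_preimset _ (fun w => w - x0)%R K).
      by apply: eq_card => w; rewrite !inE -hK (eqP hx0).
    by apply: (can_inj (g := fun w => w + x0)%R) => w; rewrite subrK.
  apply/eqP; rewrite cards_eq0; apply/eqP/setP => w; rewrite !inE.
  by apply/negP => hw; apply: hn; exists w.
have lt0 : 0 < INR #|K| by apply: lt_0_INR; apply/ltP.
have ltN : 0 < INR #|{: 'cV['F_2]_m}| by apply: lt_0_INR; apply/ltP.
rewrite /entropy.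
rewrite (eq_bigr (fun v => law g v * log2 (INR #|K| / INR #|{: 'cV['F_2]_m}|))); last first.
  move=> v _; rewrite /law fib; case: ifP => _ //=.
  by rewrite /Rdiv !Rmult_0_l.
rewrite bigR_mulr.
have -> : \big[Rplus/0]_(v : V) law g v = 1.
  rewrite /law (eq_bigr (fun v => INR #|[set w | g w == v]| * / INR #|{: 'cV['F_2]_m}|)) //.
  rewrite bigR_mulr -INR_sum sum_fibers. apply: Rinv_r; apply: Rgt_not_eq; exact: ltN.
have l2 : ln 2 <> 0 by apply: ln_neq_0; lra.
rewrite /log2 /Rdiv ln_mult ?ln_Rinv //; last by apply: Rinv_0_lt_compat.
field; exact: l2.
Qed.

Lemma restr_eq m (S : {set 'I_m}) (x y : 'cV['F_2]_m) :
  (restr S x == restr S y) = [forall i in S, (x - y)%R i ord0 == 0%R].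
Proof.
apply/eqP/forallP => [e i|h].
  apply/implyP => hi; have := congr1 (fun f : {ffun 'I_m -> option 'F_2} => f i) e; rewrite /= !ffunE hi.
  by rewrite !mxE => -[->]; rewrite subrr.
apply/ffunP => i; rewrite !ffunE; case: ifP => // hi.
by have := implyP (h i) hi; rewrite !mxE subr_eq0 => /eqP ->.
Qed.

Lemma INR_expn (a n : nat) : INR (a ^ n)%N = INR a ^ n.
Proof. elim: n => [|n IH] //; by rewrite expnS mult_INR IH. Qed.

Lemma bulmac_vec k m (A : 'M['F_2]_(k, m)) (S : {set 'I_m}) :
  bulmac_rank A S = INR (vec_rank A S).
Proof.
rewrite /bulmac_rank /minfo.
rewrite (@entropy_K m _ _ (K1 S)); last first.
  by move=> x y; rewrite restr_eq inE.
rewrite (@entropy_K m _ _ (K2 A S)); last first.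
  move=> x y; rewrite inE xpair_eqE restr_eq mulmxBr subr_eq0.
  by rewrite -subr_eq0.
rewrite (@entropy_K m _ _ [set 0%R]); last first.
  move=> x y; rewrite inE !xpair_eqE !restr_eq.
  apply/idP/idP.
    move=> /andP [h1 /andP [_ h2]]; apply/eqP/matrixP => i j; rewrite (ord1 j) [in RHS]mxE.
    case hi: (i \in S); first exact: (eqP (implyP (forallP h1 i) hi)).
    by apply/eqP; apply: (implyP (forallP h2 i)); rewrite inE hi.
  move/eqP/subr0_eq => ->; rewrite eqxx subrr /=.
  by apply/andP; split; apply/forallP => i; apply/implyP => _; rewrite mxE.
rewrite cards1.
have r_le : (\rank (AS A S) <= m)%N by exact: rank_leq_col.
have hN : #|{: 'cV['F_2]_m}| = (#|K1 S| * #|K2 A S| * 2 ^ \rank (AS A S))%N.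
  rewrite card_K12 /KA card_ker card_mx card_F2 muln1 -expnD subnK //.
have p1 : 0 < INR #|K1 S|.
  apply: lt_0_INR; apply/ltP; apply/card_gt0P; exists 0%R; rewrite inE.
  by apply/forallP => i; apply/implyP => _; rewrite mxE.
have p2 : 0 < INR #|K2 A S|.
  apply: lt_0_INR; apply/ltP; apply/card_gt0P; exists 0%R; rewrite inE mulmx0 eqxx.
  by apply/forallP => i; apply/implyP => _; rewrite mxE.
have l2 : ln 2 <> 0 by apply: ln_neq_0; lra.
rewrite hN !mult_INR INR_expn ln_1 !ln_mult ?ln_pow //=; try lra.
- rewrite /vec_rank /AS; replace (1 + 1) with 2 by ring. set a := ln (INR _). set b := ln (INR _). set c := INR _. rewrite /Rdiv. set L := ln 2. have hL : L <> 0 by []. clearbody a b c L. field. exact hL.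
- apply: Rmult_lt_0_compat => //.
- apply: pow_lt; lra.
Qed.

Theorem mainTheorem3 (T : finType) (r : {set T} -> nat) :
  is_matroid_rank r -> (binary_matroid r <-> bulmac_matroid r).
Proof.
move=> _; split.
  move=> [k [n [B [f [bf h]]]]]; exists k, n, B, f; split => // X.
  by rewrite bulmac_vec h.
move=> [k [n [B [f [bf h]]]]]; exists k, n, B, f; split => // X.
by apply: INR_eq; rewrite -bulmac_vec h.
Qed.
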